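(* Let $L\subset\mathbb{Z}^m$ be a non-zero lattice with $L\cap\mathbb{N}^m=\{\mathbf 0\}$ and $\mathrm{Sat}(L)=\ker_{\mathbb{Z}}(\mathcal{A})$. Then $\mathcal{T}_{\min}=\mathcal{C}_{\min}$.
   Context: $K$ is a field, $\mathbf x^{\mathbf u}=x_1^{u_1}\cdots x_m^{u_m}$, $\mathbf u_\pm$ are the positive/negative parts of $\mathbf u\in\mathbb{Z}^m$, $I_L=(\mathbf x^{\mathbf u_+}-\mathbf x^{\mathbf u_-}:\mathbf u\in L)\subset K[x_1,\ldots,x_m]$, $\mathrm{Sat}(L)=\{\mathbf u:d\mathbf u\in L\text{ for some nonzero }d\in\mathbb{Z}\}$, $\mathcal{A}=\{\mathbf a_1,\ldots,\mathbf a_m\}\subset\mathbb{Z}^n$ and $\ker_{\mathbb{Z}}(\mathcal{A})=\{\mathbf q\in\mathbb{Z}^m:\sum q_i\mathbf a_i=0\}$. A circuit of $\mathcal{A}$ is a nonzero $\mathbf u\in\ker_{\mathbb{Z}}(\mathcal{A})$ with inclusion-minimal support $\mathrm{supp}(\mathbf u)=\{i:u_i\neq0\}$ among nonzero vectors of $\ker_{\mathbb{Z}}(\mathcal{A})$ and relatively prime coordinates. $\mathcal{C}$ is the set of all $E\subseteq\{1,\ldots,m\}$ with $E=\mathrm{supp}(\mathbf u_+)$ or $E=\mathrm{supp}(\mathbf u_-)$ for some circuit $\mathbf u$, and $\mathcal{C}_{\min}$ its inclusion-minimal elements. A monomial $M$ is indispensable of $I_L$ if every system of binomial generators of $I_L$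 contains a binomial having $M$ as a monomial; $\mathcal{T}_{\min}$ is the set of inclusion-minimal elements among the supports of indispensable monomials of $I_L$ (with $\mathrm{supp}(\mathbf x^{\mathbf w})=\mathrm{supp}(\mathbf w)$). *)

(* Defs.v *)
From HB Require Import structures.
From mathcomp Require Import all_boot all_order all_algebra.
From mathcomp Require Import mpoly.
Set Implicit Arguments. Unset Strict Implicit. Unset Printing Implicit Defensive.
Import Order.TTheory GRing.Theory Num.Theory.
Local Open Scope ring_scope.

(* Vectors of Z^m are row vectors 'rV[int]_m; the i-th coordinate of u is u ord0 i. *)

Definition pos_part (z : int) : nat := match z with Posz n => n | Negz _ => 0%N end.
Definition neg_part (z : int) : nat := match z with Posz _ => 0%N | Negz n => n.+1 end.

Definition upos m (u : 'rV[int]_m) : 'X_{1..m} := [multinom pos_part (u ord0 i) | i < m].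
Definition uneg m (u : 'rV[int]_m) : 'X_{1..m} := [multinom neg_part (u ord0 i) | i < m].

Definition suppZ m (u : 'rV[int]_m) : {set 'I_m} := [set i | u ord0 i != 0].
Definition suppM m (w : 'X_{1..m}) : {set 'I_m} := [set i | w i != 0%N].

Definition in_ideal (K : fieldType) m (S : {mpoly K[m]} -> Prop) (p : {mpoly K[m]}) : Prop :=
  exists (k : nat) (c g : 'I_k -> {mpoly K[m]}),
    (forall j, S (g j)) /\ p = \sum_(j < k) c j * g j.

Definition lattice_gens (K : fieldType) m (L : {pred 'rV[int]_m}) (f : {mpoly K[m]}) : Prop :=
  exists2 u, u \in L & f = 'X_[upos u] - 'X_[uneg u].
Definition I_L (K : fieldType) m (L : {pred 'rV[int]_m}) : {mpoly K[m]} -> Prop :=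
  in_ideal (@lattice_gens K m L).

Definition is_binomial (K : fieldType) m (f : {mpoly K[m]}) : Prop :=
  exists a b : 'X_{1..m}, a != b /\ f = 'X_[a] - 'X_[b].
Definition has_monomial (K : fieldType) m (f : {mpoly K[m]}) (w : 'X_{1..m}) : Prop :=
  exists a b : 'X_{1..m}, a != b /\ f = 'X_[a] - 'X_[b] /\ (w = a \/ w = b).

Definition binomial_generating_system (K : fieldType) m
    (I G : {mpoly K[m]} -> Prop) : Prop :=
  (forall f, G f -> is_binomial f) /\ (forall p, in_ideal G p <-> I p).

Definition indispensable_monomial (K : fieldType) m (L : {pred 'rV[int]_m})
    (w : 'X_{1..m}) : Prop :=
  forall G : {mpoly K[m]} -> Prop, binomial_generating_system (@I_L K m L) G ->
    exists f, G f /\ has_monomial f w.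

(* Sat(L) and ker_Z(A); A is the m x n integer matrix whose rows are a_1..a_m *)
Definition Sat m (L : {pred 'rV[int]_m}) (u : 'rV[int]_m) : Prop :=
  exists2 d : int, d != 0 & d *: u \in L.
Definition kerZ m n (A : 'M[int]_(m, n)) (q : 'rV[int]_m) : Prop := q *m A = 0.

Definition circuit m n (A : 'M[int]_(m, n)) (u : 'rV[int]_m) : Prop :=
  [/\ kerZ A u, u != 0,
      (forall v, kerZ A v -> v != 0 -> ~ (suppZ v \proper suppZ u)) &
      (\big[gcdn/0%N]_(i < m) `|u ord0 i|%N = 1%N)].

Definition Cfam m n (A : 'M[int]_(m, n)) (E : {set 'I_m}) : Prop :=
  exists2 u, circuit A u & (E = suppM (upos u) \/ E = suppM (uneg u)).
Definition Tfam (K : fieldType) m (L : {pred 'rV[int]_m}) (E : {set 'I_m}) : Prop :=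
  exists2 w, indispensable_monomial K L w & E = suppM w.
Definition minimal_elts m (F : {set 'I_m} -> Prop) (E : {set 'I_m}) : Prop :=
  F E /\ forall E', F E' -> ~ (E' \proper E).

(* Main.v *)
Require Import Defs.
From mathcomp Require Import all_boot all_order all_algebra.
From mathcomp Require Import mpoly.
From mathcomp Require Import zify ring.
From Stdlib Require Import Classical.
Set Implicit Arguments. Unset Strict Implicit. Unset Printing Implicit Defensive.
Import Order.TTheory GRing.Theory Num.Theory.
Local Open Scope ring_scope.

Lemma pos_part_neq0 (z : int) : (pos_part z != 0%N) = (0 < z).
Proof. by case: z => [[|k]|k]. Qed.
Lemma neg_part_neq0 (z : int) : (neg_part z != 0%N) = (z < 0).
Proof. by case: z => [[|k]|k]. Qed.

Lemma in_supp_upos m (u : 'rV[int]_m) i : (i \in suppM (upos u)) = (0 < u ord0 i).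
Proof. by rewrite inE mnmE pos_part_neq0. Qed.
Lemma in_supp_uneg m (u : 'rV[int]_m) i : (i \in suppM (uneg u)) = (u ord0 i < 0).
Proof. by rewrite inE mnmE neg_part_neq0. Qed.

Lemma supp_uneg_opp m (u : 'rV[int]_m) : suppM (uneg u) = suppM (upos (- u)).
Proof. by apply/setP => i; rewrite in_supp_upos in_supp_uneg mxE oppr_gt0. Qed.

Lemma upos_neq_uneg m (u : 'rV[int]_m) : u != 0 -> upos u != uneg u.
Proof.
apply: contraNN => /eqP H; apply/eqP/matrixP => i j; rewrite ord1 mxE.
have := congr1 (fun w : 'X_{1..m} => w j) H; rewrite /= !mnmE.
by case: (u ord0 j) => [[|k]|k].
Qed.

Lemma min_transfer m (T C Q : {set 'I_m} -> Prop) :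
  (forall E, T E -> Q E) -> (forall E, C E -> Q E) ->
  (forall E, Q E -> exists2 E', T E' & E' \subset E) ->
  (forall E, Q E -> exists2 E', C E' & E' \subset E) ->
  forall E, minimal_elts T E -> minimal_elts C E.
Proof.
move=> TQ CQ QT QC E [TE minT].
have [E' CE' sE'E] := QC E (TQ E TE).
have [E'' TE'' sE''E'] := QT E' (CQ E' CE').
have eqE : E' = E.
  apply/eqP; rewrite eqEsubset sE'E /=.
  apply: contraT => nsub.
  have : E'' \proper E by rewrite properEneq (subset_trans sE''E' sE'E) andbT;
    apply: contraNneq nsub => <-.
  by move/(minT _ TE'').
subst E'; split => // E1 CE1 pE1.
have [E2 TE2 sE2] := QT E1 (CQ E1 CE1).
by apply: (minT E2 TE2); apply: (sub_proper_trans sE2 pE1).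
Qed.
Lemma mdeg_lt m (a b : 'X_{1..m}) : (a <= b)%MM -> a != b -> (mdeg a < mdeg b)%N.
Proof.
move=> le ne; have E := submK le; rewrite -E mdegD.
rewrite -{1}[mdeg a]add0n ltn_add2r lt0n mdeg_eq0.
by apply: contra ne => /eqP H; rewrite -E H add0m.
Qed.

Lemma min_elt m (P : 'X_{1..m} -> Prop) a : P a ->
  exists a', [/\ P a', (a' <= a)%MM & forall a'', P a'' -> (a'' <= a')%MM -> a'' = a'].
Proof.
have [k] := ubnP (mdeg a); elim: k a => // k IH a lt Pa.
case: (classic (exists a'', [/\ P a'', (a'' <= a)%MM & a'' != a])).
  move=> [a'' [Pa'' le ne]].
  have lt' : (mdeg a'' < k)%N by apply: leq_trans (mdeg_lt le ne) _.
  have [a' [Pa' le' mn]] := IH a'' lt' Pa''.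
  by exists a'; split => //; apply: lepm_trans le.
move=> nex; exists a; split => //; first exact: lepm_refl.
move=> a'' Pa'' le; apply: NNPP => ne; apply: nex; exists a''; split => //.
exact/eqP.
Qed.

Section Poly.
Variables (K : fieldType) (m : nat).
Implicit Types (p q : {mpoly K[m]}).

Lemma coefMX_le p (e t : 'X_{1..m}) : (p * 'X_[e])@_t != 0 -> (e <= t)%MM.
Proof.
rewrite -mcoeff_msupp (perm_mem (msuppMX p e)) => /mapP [t' _ ->].
exact: lem_addr.
Qed.

Lemma in_ideal_gen (S : {mpoly K[m]} -> Prop) g : S g -> in_ideal S g.
Proof.
move=> Sg; exists 1%N, (fun _ => 1), (fun _ => g); split => //.
by rewrite big_ord1 mul1r.
Qed.

Lemma in_ideal_opp (S : {mpoly K[m]} -> Prop) p : in_ideal S p -> in_ideal S (- p).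
Proof.
move=> [k [c [g [Sg ->]]]]; exists k, (fun j => - c j), g; split => //.
by rewrite -sumrN; apply: eq_bigr => j _; rewrite mulNr.
Qed.

Lemma in_ideal_mono (S S' : {mpoly K[m]} -> Prop) p :
  (forall f, S f -> S' f) -> in_ideal S p -> in_ideal S' p.
Proof. by move=> H [k [c [g [Sg ->]]]]; exists k, c, g; split => // j; apply: H. Qed.

Lemma upos0_uneg0 : upos (0 : 'rV[int]_m) = uneg 0.
Proof. by apply/mnmP => i; rewrite !mnmE mxE. Qed.

Definition G0 (L : {pred 'rV[int]_m}) (f : {mpoly K[m]}) : Prop :=
  exists2 u, u \in L & (u != 0 /\ f = 'X_[upos u] - 'X_[uneg u]).

Lemma G0_system (L : {pred 'rV[int]_m}) :
  (exists2 u, u \in L & u != 0) -> binomial_generating_system (@I_L K m L) (G0 L).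
Proof.
move=> [u0 Lu0 nz0]; split.
  move=> f [u Lu [nz ->]]; exists (upos u), (uneg u); split => //.
  exact: upos_neq_uneg.
move=> p; split.
  apply: in_ideal_mono => f [u Lu [_ ->]]; by exists u.
move=> [k [c [g [Sg ->]]]].
pose g0 : {mpoly K[m]} := 'X_[upos u0] - 'X_[uneg u0].
exists k, (fun j => if g j == 0 then 0 else c j), (fun j => if g j == 0 then g0 else g j).
split.
  move=> j; case: eqP => [_|ne]; first by exists u0.
  have [u Lu E] := Sg j; exists u => //; split => //.
  apply/negP => /eqP u0'; apply: ne; rewrite E u0' upos0_uneg0; exact: subrr.
by apply: eq_bigr => j _; case: eqP => [->|]; rewrite ?mulr0 ?mul0r.
Qed.


Definition Qfam (L : {pred 'rV[int]_m}) (E : {set 'I_m}) : Prop :=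
  exists2 v, v \in L & (v != 0 /\ E = suppM (upos v)).

Lemma T_Q (L : {pred 'rV[int]_m}) : zmod_closed L -> (exists2 u, u \in L & u != 0) ->
  forall E, Tfam K L E -> Qfam L E.
Proof.
move=> zL ne E [w ind ->].
have [f [[u Lu [nz Ef]] [a [b [ab [Ef' hw]]]]]] := ind _ (G0_system ne).
have cw : f@_w != 0.
  rewrite Ef' mcoeffB !mcoeffX; case: hw => ->.
    by rewrite eqxx [b == a]eq_sym (negbTE ab) subr0 oner_neq0.
  by rewrite eqxx (negbTE ab) sub0r oppr_eq0 oner_neq0.
move: cw; rewrite Ef mcoeffB !mcoeffX.
case: (upos u =P w) => [<- _|_]; first by exists u.
case: (uneg u =P w) => [<- _|_]; last by rewrite subrr eqxx.
exists (- u); first exact: (GRing.zmod_closedN zL).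
by split; [rewrite oppr_eq0 | exact: supp_uneg_opp].
Qed.

Definition Nn (L : {pred 'rV[int]_m}) (a : 'X_{1..m}) : Prop :=
  exists b, a != b /\ I_L L ('X_[a] - 'X_[b] : {mpoly K[m]}).

Lemma min_Nn_indisp (L : {pred 'rV[int]_m}) a :
  Nn L a -> (forall a'', Nn L a'' -> (a'' <= a)%MM -> a'' = a) ->
  indispensable_monomial K L a.
Proof.
move=> [b [ab Iab]] mn G [Gb Geq].
have [k [c [g [Gg Eg]]]] := (proj2 (Geq _)) Iab.
have c1 : ('X_[a] - 'X_[b] : {mpoly K[m]})@_a != 0.
  by rewrite mcoeffB !mcoeffX eqxx [b == a]eq_sym (negbTE ab) subr0 oner_neq0.
have [j nzj] : exists j, (c j * g j)@_a != 0.
  apply: NNPP => nex; move: c1; rewrite Eg raddf_sum big1 ?eqxx // => j _.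
  by apply/eqP; apply: NNPP => H; apply: nex; exists j; apply/negP.
have [aj [bj [ne Egj]]] := Gb _ (Gg j).
have Ij : I_L L (g j) by apply/Geq/in_ideal_gen.
exists (g j); split => //; exists aj, bj; split => //; split => //.
move: nzj; rewrite Egj mulrBr mcoeffB.
case: (boolP ((c j * 'X_[aj])@_a == 0)) => [/eqP z1|nz1 _].
  rewrite z1 sub0r oppr_eq0 => /coefMX_le le; right; symmetry; apply: mn => //.
  exists aj; split; first by rewrite eq_sym.
  by rewrite -opprB -Egj; apply: in_ideal_opp.
have le := coefMX_le nz1; left; symmetry; apply: mn => //.
by exists bj; split => //; rewrite -Egj.
Qed.

Lemma Q_T (L : {pred 'rV[int]_m}) E : Qfam L E -> exists2 E', Tfam K L E' & E' \subset E.
Proof.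
move=> [u Lu [nz ->]].
have Nu : Nn L (upos u).
  exists (uneg u); split; first exact: upos_neq_uneg.
  by apply: in_ideal_gen; exists u.
have [a [Na le mn]] := min_elt Nu.
exists (suppM a); first by exists a => //; apply: min_Nn_indisp.
apply/subsetP => i; rewrite !inE; move/mnm_lepP: le => /(_ i).
by case: (a i) => // k; case: ((upos u) i).
Qed.

End Poly.

Lemma aux1 (a b c d : int) : 0 < a*b -> `|c| * `|b| <= `|a| * `|d| -> 0 <= (`|d| * a - `|c| * b) * a.
Proof. move=> h1 h2. nia. Qed.
Lemma aux2 (a b c d : int) : a*b <= 0 -> 0 <= (`|d| * a - `|c| * b) * a.
Proof. move=> h1. nia. Qed.
Lemma aux3 (x y a: int) : x != 0 -> y != 0 -> 0 <= x * y -> 0 < y * a -> 0 < x * a.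
Proof. move=> /eqP h1 /eqP h2 h3 h4. nia. Qed.
Lemma aux4 (a b : int) : 0 < a * b -> 0 < `|b| /\ 0 < `|a|.
Proof.
move=> h; rewrite !normr_gt0; split; apply/eqP => b0; move: h; rewrite b0 ?mulr0 ?mul0r ltxx //.
Qed.
Lemma ratconv (a b c d : int) : 0 < b -> 0 < d ->
  (a%:~R / b%:~R : rat) <= c%:~R / d%:~R -> a * d <= c * b.
Proof.
move=> hb hd; rewrite ler_pdivrMr ?ltr0z // mulrAC ler_pdivlMr ?ltr0z //.
by rewrite -!intrM ler_int.
Qed.

Section Lin.
Variables (m n : nat) (A : 'M[int]_(m, n)).

Definition compat (v u : 'rV[int]_m) := forall i, v ord0 i != 0 -> 0 < v ord0 i * u ord0 i.

Lemma in_suppZ (v : 'rV[int]_m) i : (i \in suppZ v) = (v ord0 i != 0).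
Proof. by rewrite inE. Qed.

Lemma nz_entry (v : 'rV[int]_m) : v != 0 -> exists i, v ord0 i != 0.
Proof.
move=> nz; apply: NNPP => H; move/negP: nz; apply; apply/eqP/matrixP => i j.
rewrite ord1 mxE; apply/eqP; apply: NNPP => H'; apply: H; exists j; exact/negP.
Qed.

Lemma normalize (u v : 'rV[int]_m) : kerZ A v -> v != 0 ->
  (forall w, kerZ A w -> w != 0 -> ~ (suppZ w \proper suppZ v)) -> compat v u ->
  exists c, circuit A c /\ compat c u.
Proof.
move=> kv nzv mnv cv.
pose g := (\big[gcdn/0%N]_(i < m) `|v ord0 i|%N)%N.
have gd : forall i, (g %| `|v ord0 i|)%N.
  by move=> i; rewrite /g (bigD1 i) //= dvdn_gcdl.
have [i0 nz0] := nz_entry nzv.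
have gpos : (0 < g)%N.
  rewrite lt0n; apply/negP => /eqP g0; have := gd i0; rewrite g0 dvd0n absz_eq0.
  by rewrite (negbTE nz0).
pose c : 'rV[int]_m := \row_i (v ord0 i %/ g%:Z)%Z.
have Hv : forall i, v ord0 i = c ord0 i * g%:Z.
  move=> i; rewrite mxE divzK //; rewrite dvdzE absz_nat; exact: gd.
have gnz : (g%:Z != 0) by rewrite eqz_nat -lt0n.
have supE : suppZ c = suppZ v.
  by apply/setP => i; rewrite !in_suppZ Hv mulf_eq0 negb_or gnz andbT.
exists c; split; last first.
  move=> i nzi; have := cv i; rewrite Hv mulf_eq0 negb_or nzi gnz => /(_ isT).
  move=> h; nia.
split.
- apply/matrixP => i j; rewrite ord1; move/matrixP: kv => /(_ ord0 j).
  rewrite !mxE => /eqP; rewrite (eq_bigr (fun k => g%:Z * (c ord0 k * A k j))).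
    by rewrite -mulr_sumr mulf_eq0 (negbTE gnz) => /eqP.
  by move=> k _; rewrite Hv; ring.
- apply: contra nzv => /eqP c0; apply/eqP/matrixP => i j.
  by rewrite ord1 Hv c0 !mxE mul0r.
- by rewrite supE.
- have E : g = (\big[gcdn/0%N]_(i < m) `|c ord0 i|%N * g)%N.
    rewrite {1}/g (eq_bigr (fun i => `|c ord0 i| * g)%N).
      by rewrite (big_morph (fun x => x * g)%N (id1 := 0%N) (op1 := gcdn)) // => x y; rewrite muln_gcdl.
    by move=> i _; rewrite Hv abszM absz_nat.
  move: E; set G := (\big[gcdn/0%N]_(i < m) _)%N => E. nia.
Qed.

Lemma step_core (u v w : 'rV[int]_m) : kerZ A v -> kerZ A w ->
  suppZ w \proper suppZ v -> compat v u -> (exists i0, 0 < v ord0 i0 * w ord0 i0) ->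
  exists v', [/\ kerZ A v', v' != 0, compat v' u & (#|suppZ v'| < #|suppZ v|)%N].
Proof.
move=> kv kw pr cv [i0 Pi0].
pose P := [pred i | 0 < v ord0 i * w ord0 i].
pose F := fun i => (`|v ord0 i|%:~R / `|w ord0 i|%:~R : rat).
have Pi0' : P i0 by [].
case: (arg_minP F Pi0') => k Pk minF.
have hmin : forall i, P i -> `|v ord0 k| * `|w ord0 i| <= `|v ord0 i| * `|w ord0 k|.
  move=> i Pi; apply: ratconv.
  - exact: (aux4 Pk).1.
  - exact: (aux4 Pi).1.
  exact: minF.
have Hsub : forall i, v ord0 i = 0 -> w ord0 i = 0.
  move=> i vi; apply/eqP; apply: NNPP => /negP wi.
  have := subsetP (proper_sub pr) i; rewrite !in_suppZ vi wi eqxx => /(_ isT).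
  done.
pose v' := `|w ord0 k| *: v - `|v ord0 k| *: w.
have Ev' : forall i, v' ord0 i = `|w ord0 k| * v ord0 i - `|v ord0 k| * w ord0 i.
  by move=> i; rewrite !mxE.
have pos : forall i, 0 <= v' ord0 i * v ord0 i.
  move=> i; rewrite Ev'; case: (boolP (P i)) => Pi.
    by apply: aux1; [exact: Pi | apply: hmin].
  by apply: aux2; move: Pi; rewrite /P /= -leNgt.
have sub' : forall i, v' ord0 i != 0 -> v ord0 i != 0.
  move=> i; apply: contra => /eqP vi; by rewrite Ev' vi (Hsub i vi) !mulr0 subr0.
have Pk' : 0 < v ord0 k * w ord0 k := Pk.
exists v'; split.
- by rewrite /kerZ mulmxBl -!scalemxAl kv kw !scaler0 subr0.
- apply/negP => /eqP v0; move: pr; rewrite properE => /andP [_]; apply/negP; apply/negPn.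
  apply/subsetP => i; rewrite !in_suppZ => vi; apply/negP => /eqP wi.
  have := Ev' i; rewrite v0 mxE wi => h.
  move/negP: vi; apply; apply/eqP; nia.
- move=> i nzi; apply: (aux3 nzi (sub' i nzi) (pos i)); apply: cv; exact: sub' i nzi.
- apply: proper_card; apply/properP; split.
    by apply/subsetP => i; rewrite !in_suppZ; apply: sub'.
  exists k; rewrite !in_suppZ; first by apply/negP => /eqP h; rewrite h mul0r in Pk'.
  by rewrite Ev' negbK; apply/eqP; nia.
Qed.

Lemma conformal (u : 'rV[int]_m) : forall v, kerZ A v -> v != 0 -> compat v u ->
  exists c, circuit A c /\ compat c u.
Proof.
move=> v; have [N] := ubnP #|suppZ v|; elim: N v => // N IH v lt kv nzv cv.
case: (classic (forall w, kerZ A w -> w != 0 -> ~ (suppZ w \proper suppZ v))) => H.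
  exact: (normalize kv nzv H cv).
have [w [kw nzw pr]] : exists w, [/\ kerZ A w, w != 0 & suppZ w \proper suppZ v].
  apply: NNPP => nex; apply: H => w kw nzw pr; apply: nex; by exists w.
have [i wi] := nz_entry nzw.
have vi : v ord0 i != 0.
  by have := subsetP (proper_sub pr) i; rewrite !in_suppZ => /(_ wi).
have [v' [kv' nzv' cv' lt']] : exists v', [/\ kerZ A v', v' != 0, compat v' u & (#|suppZ v'| < #|suppZ v|)%N].
  case: (ltrP 0 (v ord0 i * w ord0 i)) => h.
    by apply: (step_core kv kw pr cv); exists i.
  apply: (step_core (w := - w) kv).
  - by rewrite /kerZ mulNmx kw oppr0.
  - have -> : suppZ (- w) = suppZ w by apply/setP => j; rewrite !in_suppZ mxE oppr_eq0.
    exact: pr.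
  - exact: cv.
  exists i; rewrite mxE mulrN oppr_gt0 lt_neqAle h andbT mulf_eq0 negb_or vi wi //.
apply: (IH v') => //; exact: leq_trans lt' _.
Qed.

Lemma aux7 (x : int) : x != 0 -> 0 < x * x.
Proof. move=> /eqP h; nia. Qed.
Lemma aux8 (x y : int) : 0 < x -> 0 < x * y -> 0 < y.
Proof. move=> h1 h2; nia. Qed.

Lemma Q_C (L : {pred 'rV[int]_m}) : (forall u, Sat L u <-> kerZ A u) ->
  forall E, Qfam L E -> exists2 E', Cfam A E' & E' \subset E.
Proof.
move=> Hsat E [u Lu [nz ->]].
have ku : kerZ A u by apply/Hsat; exists 1; rewrite ?oner_eq0 // scale1r.
have [c [circ cc]] := conformal ku nz (fun i h => aux7 h).
exists (suppM (upos c)); first by exists c => //; left.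
apply/subsetP => i; rewrite !in_supp_upos => h.
apply: (aux8 h); apply: cc; by rewrite gt_eqF.
Qed.

Lemma C_Q (L : {pred 'rV[int]_m}) : zmod_closed L -> (forall u, Sat L u <-> kerZ A u) ->
  forall E, Cfam A E -> Qfam L E.
Proof.
move=> zL Hsat E [c [kc nzc _ _] hE].
have [d dnz Ld] := (proj2 (Hsat c)) kc.
have [i ci] := nz_entry nzc.
have vnz : d *: c != 0.
  apply/negP => /eqP h; have := congr1 (fun M : 'rV[int]_m => M ord0 i) h.
  rewrite !mxE => /eqP; rewrite mulf_eq0 (negbTE dnz) (negbTE ci).
  done.
have Lv' : - (d *: c) \in L by exact: (GRing.zmod_closedN zL).
have vnz' : - (d *: c) != 0 by rewrite oppr_eq0.
case: (ltrP 0 d) => hd; case: hE => ->.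
- exists (d *: c) => //; split => //; apply/setP => j.
  by rewrite !in_supp_upos mxE pmulr_rgt0.
- exists (- (d *: c)) => //; split => //; apply/setP => j.
  by rewrite in_supp_uneg in_supp_upos !mxE oppr_gt0 pmulr_rlt0.
- have hd' : d < 0 by rewrite lt_neqAle dnz hd.
  exists (- (d *: c)) => //; split => //; apply/setP => j.
  by rewrite !in_supp_upos !mxE -mulNr pmulr_rgt0 // oppr_gt0.
- have hd' : d < 0 by rewrite lt_neqAle dnz hd.
  exists (d *: c) => //; split => //; apply/setP => j.
  by rewrite in_supp_uneg in_supp_upos !mxE nmulr_rgt0.
Qed.

End Lin.

Theorem proposition2p6 (K : fieldType) (m n : nat) (A : 'M[int]_(m, n))
    (L : {pred 'rV[int]_m}) :
  zmod_closed L ->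
  (exists2 u, u \in L & u != 0) ->
  (forall u, u \in L -> (forall i, 0 <= u ord0 i) -> u = 0) ->
  (forall u, Sat L u <-> kerZ A u) ->
  forall E : {set 'I_m}, minimal_elts (Tfam K L) E <-> minimal_elts (Cfam A) E.
Proof.
move=> zL ne _ Hsat E; split.
  apply: (@min_transfer m (Tfam K L) (Cfam A) (Qfam L)).
  - exact: T_Q.
  - exact: C_Q.
  - exact: Q_T.
  - exact: Q_C.
apply: (@min_transfer m (Cfam A) (Tfam K L) (Qfam L)).
- exact: C_Q.
- exact: T_Q.
- exact: Q_C.
- exact: Q_T.
Qed.
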